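(* Let $K$ be a field, $X$ a finite connected poset, $\varphi$ a Lie automorphism of $I(X,K)$, and $e_{xy}\in L_i$ with $i>0$. Let $u<v$ and $k\in K^*$ be such that $\widetilde\varphi(e_{xy})=k\,e_{uv}$. Then $\varphi(e_{xy})-\widetilde\varphi(e_{xy})\in\langle e_{uv}\rangle\cap J_{i+1}$.
   Context: $I(X,K)$ is the incidence algebra: functions $f:X\times X\to K$ with $f(x,y)=0$ unless $x\le y$, product $(fg)(x,y)=\sum_{x\le t\le y}f(x,t)g(t,y)$; $e_{xy}$ ($x\le y$) is the basis element equal to $1$ at $(x,y)$ and $0$ elsewhere; $\langle e_{uv}\rangle$ is the two-sided ideal generated by $e_{uv}$. A Lie automorphism is a bijective linear map preserving $[f,g]=fg-gf$. Let $l(\lfloor x,y\rfloor)$ be the maximum length of a chain in $\{z:x\le z\le y\}$; $L_i=\mathrm{span}_K\{e_{xy}: l(\lfloor x,y\rfloor)=i\}$ and $J_i=\mathrm{span}_K\{e_{xy}: l(\lfloor x,y\rfloor)\ge i\}$ ($i\ge0$). $\widetilde\varphi$ is the linear map sending $e_{xy}\in L_i$ to the $L_i$-component of $\varphi(e_{xy})$ in $I(X,K)=\bigoplus_iL_i$; for $i>0$ it is known that $\widetilde\varphi(e_{xy})$ is a nonzero multiple of some $e_{uv}$ with $u<v$. Connected means any two elements are joined by a sequence in which consecutive elements are in a covering relation. *)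

(* Defs.v *)
From HB Require Import structures.
From mathcomp Require Import all_boot all_order all_algebra.
Set Implicit Arguments. Unset Strict Implicit. Unset Printing Implicit Defensive.
Import Order.TTheory GRing.Theory.
Local Open Scope ring_scope.

(* Ambient space: all functions X x X -> K; I(X,K) is the subspace [incid]. *)
Notation IA X K := {ffun (X * X)%type -> K}.

Section Incidence.
Variables (d : Order.disp_t) (X : finPOrderType d) (K : fieldType).

Definition incid (f : IA X K) : Prop :=
  forall x y : X, ~~ (x <= y)%O -> f (x, y) = 0.

Definition imul (f g : IA X K) : IA X K :=
  [ffun p : X * X => \sum_(t : X | ((p.1 <= t)%O && (t <= p.2)%O)) f (p.1, t) * g (t, p.2)].

Definition ibracket (f g : IA X K) : IA X K := imul f g - imul g f.

Definition eb (u v : X) : IA X K :=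
  [ffun p : X * X => if (p.1 == u) && (p.2 == v) then 1 else 0].

Definition iscale (a : K) (f : IA X K) : IA X K := [ffun p => a * f p].

Definition lie_aut (phi : IA X K -> IA X K) : Prop :=
  [/\ forall f, incid f -> incid (phi f),
      forall (a : K) f g, incid f -> incid g -> phi (iscale a f + g) = iscale a (phi f) + phi g,
      forall f g, incid f -> incid g -> phi f = phi g -> f = g,
      forall g, incid g -> exists2 f, incid f & phi f = g
    & forall f g, incid f -> incid g -> phi (ibracket f g) = ibracket (phi f) (phi g)].

(* maximal length of a chain in [x,y]; a chain with n+1 elements has length n *)
Definition chain_in (x y : X) (s : seq X) : bool :=
  sorted (fun a b => (a < b)%O) s && all (fun z => (x <= z)%O && (z <= y)%O) s.

Definition ilen (x y : X) : nat :=
  \max_(n < #|X|.+1 | [exists s : n.+1.-tuple X, chain_in x y s]) n.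

Definition Lcomp (i : nat) (f : IA X K) : IA X K :=
  [ffun p : X * X => if ((p.1 <= p.2)%O && (ilen p.1 p.2 == i)) then f p else 0].

Definition inJ (i : nat) (f : IA X K) : Prop :=
  incid f /\ forall x y : X, (x <= y)%O -> (ilen x y < i)%N -> f (x, y) = 0.

(* two-sided ideal of I(X,K) generated by e_uv (I(X,K) is unital) *)
Definition in_ideal_gen (u v : X) (h : IA X K) : Prop :=
  exists n (fs gs : 'I_n -> IA X K),
    (forall j, incid (fs j) /\ incid (gs j)) /\
    h = \sum_(j < n) imul (imul (fs j) (eb u v)) (gs j).

Definition covers (x y : X) : bool :=
  (x < y)%O && [forall z : X, ~~ ((x < z)%O && (z < y)%O)].

Definition connected_poset : Prop :=
  forall x y : X, exists s : seq X,
    path (fun a b => covers a b || covers b a) x s /\ last x s = y.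

End Incidence.

(* Main.v *)
Require Import Defs.
From HB Require Import structures.
From mathcomp Require Import all_boot all_order all_algebra.
Import Order.TTheory GRing.Theory.
Local Open Scope ring_scope.

Set Implicit Arguments. Unset Strict Implicit. Unset Printing Implicit Defensive.

Section Ilen.
Variables (d : Order.disp_t) (X : finPOrderType d).

Lemma ilen_ge (x y : X) (s : seq X) : chain_in x y s -> ((size s).-1 <= ilen x y)%N.
Proof.
move=> hc; case: s hc => [|a s] hc //=.
have hu : uniq (a :: s) by apply: lt_sorted_uniq; case/andP: hc.
have hs : (size s < #|X|.+1)%N.
  rewrite ltnS. have := max_card (mem (a :: s)). rewrite (card_uniqP hu); exact: ltnW.
rewrite /ilen.
apply: (@leq_bigmax_cond _ _ _ (Ordinal hs)) => /=.
by apply/existsP; exists (in_tuple (a :: s)).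
Qed.

Lemma ilen_chain (x y : X) m : (0 < m)%N -> (m <= ilen x y)%N ->
  exists s : seq X, chain_in x y s /\ (m.+1 <= size s)%N.
Proof.
move=> m0 hm.
case: (boolP [exists n : 'I_#|X|.+1, (m <= n)%N && [exists s : n.+1.-tuple X, chain_in x y s]]).
  case/existsP=> n /andP[hmn /existsP[s hs]].
  by exists s; split=> //; rewrite size_tuple ltnS.
move=> hn; exfalso.
have : (ilen x y <= m.-1)%N.
  apply/bigmax_leqP => n hP.
  case: (leqP m n) => h; last by rewrite -ltnS prednK.
  by exfalso; move/negP: hn; apply; apply/existsP; exists n; rewrite h.
by rewrite leqNgt prednK // => /negP; apply.
Qed.

Lemma ilen_refl (a : X) : ilen a a = 0%N.
Proof.
apply/eqP; rewrite -leqn0 leqNgt; apply/negP => h.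
have [s [hc hs]] := @ilen_chain a a 1 isT h.
case: s hc hs => [|p [|q s]] // /andP[hs1 hs2] _.
move: hs1 => /= /andP[hpq _]; move: hs2 => /= /and3P[/andP[h1 h2] /andP[h3 h4] _].
have : p = q by apply/le_anti; rewrite (le_trans h2 h3) (le_trans h4 h1).
by move=> e; rewrite e ltxx in hpq.
Qed.

Lemma ilen_lt1 (a b : X) : (a < b)%O -> (1 <= ilen a b)%N.
Proof.
move=> hab; have := @ilen_ge a b [:: a; b]; apply.
by rewrite /chain_in /= hab lexx (ltW hab) lexx.
Qed.

Lemma ilen_le_eq (a b : X) : (a <= b)%O -> (ilen a b < 1)%N -> a = b.
Proof.
rewrite le_eqVlt => /orP[/eqP //|/ilen_lt1]; by case: (ilen a b).
Qed.

Lemma ilen_M1 (a t b : X) : (a < t)%O -> (t <= b)%O -> ((ilen t b).+1 <= ilen a b)%N.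
Proof.
move=> hat htb.
case e: (ilen t b) => [|n]; first by apply: ilen_lt1; exact: lt_le_trans htb.
have [s [hc hs]] := @ilen_chain t b n.+1 isT (eq_leq (esym e)).
have hc2 : chain_in a b (a :: s).
  case/andP: hc; case: s hs => [|c s] // hs hso hal.
  have htc : (t <= c)%O by move: hal => /= /andP[/andP[]].
  apply/andP; split; first by rewrite /= (lt_le_trans hat htc); exact: hso.
  apply/allP => z; rewrite inE => /orP[/eqP->|hz].
    by rewrite lexx (ltW (lt_le_trans hat htb)).
  by move/allP: hal => /(_ z hz) /andP[h1 h2]; rewrite h2 (le_trans (ltW hat) h1).
have := ilen_ge hc2; rewrite /=; exact: leq_trans.
Qed.

Lemma ilen_M2 (a t b : X) : (a <= t)%O -> (t < b)%O -> ((ilen a t).+1 <= ilen a b)%N.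
Proof.
move=> hat htb.
case e: (ilen a t) => [|n]; first by apply: ilen_lt1; exact: le_lt_trans htb.
have [s [hc hs]] := @ilen_chain a t n.+1 isT (eq_leq (esym e)).
have hc2 : chain_in a b (rcons s b).
  case/andP: hc; case: s hs => [|c s] // hs hso hal.
  have hl : (last c s <= t)%O.
    have : last c s \in c :: s by exact: mem_last.
    by move/(allP hal) => /andP[].
  have hab : (a <= b)%O by exact: ltW (le_lt_trans hat htb).
  apply/andP; split.
    rewrite /= rcons_path (le_lt_trans hl htb) andbT; exact: hso.
  apply/allP => z; rewrite mem_rcons inE => /orP[/eqP->|hz]; first by rewrite hab lexx.
  by move/allP: hal => /(_ z hz) /andP[h3 h4]; rewrite h3 (ltW (le_lt_trans h4 htb)).
have := ilen_ge hc2; rewrite size_rcons /=; exact: leq_trans.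
Qed.

Lemma ilen_L1 (a b : X) j : (a <= b)%O -> (j < ilen a b)%N ->
  exists2 t, (a < t)%O && (t <= b)%O & (j <= ilen t b)%N.
Proof.
move=> hab hj.
case: j hj => [|j] hj.
  exists b => //; rewrite lexx andbT lt_neqAle hab andbT.
  by apply/eqP => e; rewrite e ilen_refl in hj.
have [s [hc hs]] := @ilen_chain a b j.+2 isT hj.
case: s hc hs => [|p [|q s]] // /andP[hso hal] hs.
move: hso => /= /andP[hpq hso].
move: hal => /= /and3P[/andP[h1 h2] /andP[h3 h4] hal].
exists q; first by rewrite (le_lt_trans h1 hpq) h4.
have hc2 : chain_in q b (q :: s).
  rewrite /chain_in /= hso lexx h4 /=.
  have := order_path_min (@lt_trans _ X) hso => hmin.
  apply/allP => z hz; move/allP: hal => /(_ z hz) /andP[_ ->].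
  by rewrite (ltW (allP hmin z hz)).
apply: leq_trans (ilen_ge hc2); by move: hs; rewrite /= !ltnS.
Qed.
End Ilen.

Section Alg.
Variables (d : Order.disp_t) (X : finPOrderType d) (K : fieldType).
Notation I := (IA X K).

Lemma eb_incid (a b : X) : (a <= b)%O -> incid (eb K a b).
Proof.
move=> hab p q hpq; rewrite ffunE /=.
by case: eqP => [ep|]; case: eqP => [eq|] //=; move: hpq; rewrite ep eq hab.
Qed.

Lemma incid0 : incid (0 : I).
Proof. by move=> p q _; rewrite ffunE. Qed.

Lemma incidD (f g : I) : incid f -> incid g -> incid (f + g).
Proof. by move=> hf hg p q h; rewrite ffunE hf // hg // addr0. Qed.

Lemma incidN (f : I) : incid f -> incid (- f).
Proof. by move=> hf p q h; rewrite ffunE hf // oppr0. Qed.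

Lemma incidB (f g : I) : incid f -> incid g -> incid (f - g).
Proof. by move=> hf hg; apply: incidD => //; apply: incidN. Qed.

Lemma incidZ c (f : I) : incid f -> incid (iscale c f).
Proof. by move=> hf p q h; rewrite ffunE hf // mulr0. Qed.

Lemma imul_incid (f g : I) : incid (imul f g).
Proof.
move=> p q hpq; rewrite ffunE /=; apply: big1 => t /andP[h1 h2].
by move: hpq; rewrite (le_trans h1 h2).
Qed.

Lemma ibr_incid (f g : I) : incid (ibracket f g).
Proof. by apply: incidB; apply: imul_incid. Qed.

Lemma imul_ebl (a b : X) (f : I) (p q : X) : (a <= b)%O -> incid f ->
  imul (eb K a b) f (p, q) = if p == a then f (b, q) else 0.
Proof.
move=> hab hf; rewrite ffunE /=.
case: (eqVneq p a) => [->|hpa]; last first.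
  by apply: big1 => t _; rewrite ffunE /= (negbTE hpa) mul0r.
case: (boolP ((a <= b)%O && (b <= q)%O)) => hb.
  rewrite (bigD1 b) //= ffunE /= !eqxx mul1r big1 ?addr0 // => t /andP[_ htb].
  by rewrite ffunE /= eqxx (negbTE htb) mul0r.
rewrite big1; last first.
  move=> t ht; rewrite ffunE /= eqxx /=; case: eqP => [et|]; last by rewrite mul0r.
  by move: hb; rewrite -et ht.
by rewrite hf //; move: hb; rewrite hab.
Qed.

Lemma imul_ebr (a b : X) (f : I) (p q : X) : (a <= b)%O -> incid f ->
  imul f (eb K a b) (p, q) = if q == b then f (p, a) else 0.
Proof.
move=> hab hf; rewrite ffunE /=.
case: (eqVneq q b) => [->|hqb]; last first.
  by apply: big1 => t _; rewrite ffunE /= (negbTE hqb) andbF mulr0.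
case: (boolP ((p <= a)%O && (a <= b)%O)) => hb.
  rewrite (bigD1 a) //= ffunE /= !eqxx mulr1 big1 ?addr0 // => t /andP[_ hta].
  by rewrite ffunE /= eqxx (negbTE hta) mulr0.
rewrite big1; last first.
  move=> t ht; rewrite ffunE /= eqxx andbT; case: eqP => [et|]; last by rewrite mulr0.
  by move: hb; rewrite -et ht.
by rewrite hf //; move: hb; rewrite hab andbT.
Qed.

Lemma decomp (f : I) : f = \sum_(p : X * X) iscale (f p) (eb K p.1 p.2).
Proof.
apply/ffunP => q; rewrite sum_ffunE (bigD1 q) //= !ffunE /= !eqxx mulr1 big1 ?addr0 //.
move=> p hp; rewrite !ffunE /=.
case: q hp => q1 q2; case: p => p1 p2 /= hp.
case: eqP => [e1|]; case: eqP => [e2|] //=; rewrite ?mulr0 //.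
by move: hp; rewrite e1 e2 eqxx.
Qed.

Lemma decomp_cond (f : I) (P : pred (X * X)) : (forall p, ~~ P p -> f p = 0) ->
  f = \sum_(p | P p) iscale (f p) (eb K p.1 p.2).
Proof.
move=> hP; rewrite {1}(decomp f) (bigID P) /= [X in _ + X]big1 ?addr0 //.
move=> p hp; apply/ffunP => q; rewrite !ffunE hP // mul0r //.
Qed.

Lemma inJ0 j : inJ j (0 : I).
Proof. by split; [exact: incid0 | move=> *; rewrite ffunE]. Qed.

Lemma inJD j (f g : I) : inJ j f -> inJ j g -> inJ j (f + g).
Proof.
move=> [hf1 hf2] [hg1 hg2]; split; first exact: incidD.
by move=> x y h1 h2; rewrite ffunE hf2 // hg2 // addr0.
Qed.

Lemma inJZ j c (f : I) : inJ j f -> inJ j (iscale c f).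
Proof.
move=> [hf1 hf2]; split; first exact: incidZ.
by move=> x y h1 h2; rewrite ffunE hf2 // mulr0.
Qed.

Lemma inJ_sum j (P : pred (X * X)) (F : X * X -> I) :
  (forall p, P p -> inJ j (F p)) -> inJ j (\sum_(p | P p) F p).
Proof.
move=> h; apply: (big_ind (inJ j)) => //; [exact: inJ0 | exact: inJD].
Qed.

Lemma brJ1 (f g : I) : incid f -> incid g -> inJ 1 (ibracket f g).
Proof.
move=> hf hg; split; first exact: ibr_incid.
move=> p q hpq hl; have e := ilen_le_eq hpq hl; subst q.
rewrite !ffunE /= (bigD1 p) ?lexx //= big1; last first.
  move=> t /andP[/andP[h1 h2] ht]; have e : t = p by apply/le_anti; rewrite h2 h1.
  by move: ht; rewrite e eqxx.
rewrite (bigD1 p) ?lexx //= big1; last first.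
  move=> t /andP[/andP[h1 h2] ht]; have e : t = p by apply/le_anti; rewrite h2 h1.
  by move: ht; rewrite e eqxx.
by rewrite !addr0 mulrC subrr.
Qed.

Lemma J1_lt (f : I) p t : inJ 1 f -> f (p, t) != 0 -> (p < t)%O.
Proof.
move=> [hf1 hf2] hn; case: (boolP (p <= t)%O) => hpt; last by move: hn; rewrite hf1 ?eqxx.
rewrite lt_neqAle hpt andbT; apply/eqP => e; subst t.
by move: hn; rewrite hf2 ?eqxx // ilen_refl.
Qed.

Lemma brJ j (f g : I) : inJ 1 f -> inJ j g -> inJ j.+1 (ibracket f g).
Proof.
move=> hf [hg1 hg2]; split; first exact: ibr_incid.
move=> p q hpq hl; rewrite !ffunE /= !big1 ?subrr //.
  move=> t /andP[h1 h2].
  have [e|ne] := eqVneq (f (t, q)) 0; first by rewrite e mulr0.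
  have htq := J1_lt hf ne.
  rewrite hg2 ?mul0r //.
  by rewrite ltnS in hl; exact: leq_trans (ilen_M2 h1 htq) hl.
move=> t /andP[h1 h2].
have [e|ne] := eqVneq (f (p, t)) 0; first by rewrite e mul0r.
have hpt := J1_lt hf ne.
rewrite hg2 ?mulr0 //.
by rewrite ltnS in hl; exact: leq_trans (ilen_M1 hpt h2) hl.
Qed.

End Alg.

Section Phi.
Variables (d : Order.disp_t) (X : finPOrderType d) (K : fieldType).
Notation I := (IA X K).

Lemma iscale1 (f : I) : iscale 1 f = f.
Proof. by apply/ffunP => p; rewrite ffunE mul1r. Qed.

Lemma iscaleN1 (f : I) : iscale (-1) f = - f.
Proof. by apply/ffunP => p; rewrite !ffunE mulN1r. Qed.

Lemma eb_inJ j (a b : X) : (a <= b)%O -> (j <= ilen a b)%N -> inJ j (eb K a b).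
Proof.
move=> hab hj; split; first exact: eb_incid.
move=> p q hpq hl; rewrite ffunE /=.
case: eqP => [ep|]; case: eqP => [eq|] //=; subst.
by move: hl; rewrite ltnNge hj.
Qed.

Lemma ibrE (f g : I) p : ibracket f g p = imul f g p - imul g f p.
Proof. rewrite /ibracket. set A := imul f g. set B := imul g f. by clearbody A B; rewrite !ffunE. Qed.

Lemma br_eb (a t b : X) : (a <= t)%O -> (t <= b)%O -> a != b ->
  ibracket (eb K a t) (eb K t b) = eb K a b.
Proof.
move=> hat htb hab; apply/ffunP => [[p q]].
rewrite ibrE.
rewrite (@imul_ebl d X K a t (eb K t b) p q hat (eb_incid K htb)).
rewrite (@imul_ebl d X K t b (eb K a t) p q htb (eb_incid K hat)).
rewrite !ffunE /= eqxx /=.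
have -> : (b == a) = false by apply/negbTE; rewrite eq_sym.
rewrite /= if_same subr0.
by case: (p == a).
Qed.

Variable phi : I -> I.
Hypothesis hphi : lie_aut phi.

Lemma phi_incid f : incid f -> incid (phi f).
Proof. by case: hphi => h *; apply: h. Qed.

Lemma phi_lin (a : K) f g : incid f -> incid g -> phi (iscale a f + g) = iscale a (phi f) + phi g.
Proof. by case: hphi => _ h *; apply: h. Qed.

Lemma phi_br f g : incid f -> incid g -> phi (ibracket f g) = ibracket (phi f) (phi g).
Proof. by case: hphi => _ _ _ _ h; apply: h. Qed.

Lemma phi_surj g : incid g -> exists2 f, incid f & phi f = g.
Proof. by case: hphi => _ _ _ h _; apply: h. Qed.

Lemma phi0 : phi 0 = 0.
Proof.
have := phi_lin 1 (@incid0 d X K) (@incid0 d X K); rewrite !iscale1 addr0 => h.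
by have := congr1 (fun z => z - phi 0) h; rewrite /= addrK subrr.
Qed.

Lemma phiD f g : incid f -> incid g -> phi (f + g) = phi f + phi g.
Proof. by move=> hf hg; rewrite -{1}(iscale1 f) phi_lin // iscale1. Qed.

Lemma phiZ c f : incid f -> phi (iscale c f) = iscale c (phi f).
Proof. by move=> hf; have := phi_lin c hf (@incid0 d X K); rewrite !addr0 phi0 addr0. Qed.

Lemma phiB f g : incid f -> incid g -> phi (f - g) = phi f - phi g.
Proof.
move=> hf hg; rewrite -iscaleN1 addrC phi_lin // iscaleN1 addrC //.
Qed.

Lemma phi_sum (P : pred (X * X)) (F : X * X -> I) : (forall p, P p -> incid (F p)) ->
  phi (\sum_(p | P p) F p) = \sum_(p | P p) phi (F p).
Proof.
move=> hF.
suff [] : incid (\sum_(p | P p) F p) /\ phi (\sum_(p | P p) F p) = \sum_(p | P p) phi (F p) by [].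
apply: (big_ind2 (fun a b => incid a /\ phi a = b)).
- by split; [exact: (@incid0 d X K) | exact: phi0].
- by move=> x1 x2 y1 y2 [h1 <-] [h2 <-]; split; [exact: incidD | exact: phiD].
- by move=> p hp; split; [exact: hF|].
Qed.

Lemma phi_basis j : (forall a b : X, (a <= b)%O -> (j < ilen a b)%N -> inJ j.+1 (phi (eb K a b))) ->
  forall f, inJ j.+1 f -> inJ j.+1 (phi f).
Proof.
move=> hb f [hf1 hf2].
rewrite (@decomp_cond _ _ _ f (fun p => (p.1 <= p.2)%O && (j < ilen p.1 p.2)%N)); last first.
  move=> [p q] /=; case: (boolP (p <= q)%O) => hpq /=; last by move=> _; apply: hf1.
  by rewrite -leqNgt -ltnS => h; apply: hf2.
rewrite phi_sum; last by move=> [p q] /andP[h _]; apply: incidZ; apply: eb_incid.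
apply: inJ_sum => [[p q]] /andP[h1 h2]; rewrite phiZ; last exact: eb_incid.
by apply: inJZ; apply: hb.
Qed.

Lemma phiJ1 f : inJ 1 f -> inJ 1 (phi f).
Proof.
apply: phi_basis => a b hab hl.
have hne : a != b by apply/eqP => e; move: hl; rewrite e ilen_refl.
rewrite -(@br_eb a a b) ?lexx // phi_br; [|exact: eb_incid (lexx a)|exact: eb_incid hab].
by apply: brJ1; apply: phi_incid; apply: eb_incid.
Qed.

Lemma phiJ j f : inJ j f -> inJ j (phi f).
Proof.
elim: j f => [|j IH] f.
  by move=> [hf _]; split; [exact: phi_incid | by []].
case: j IH => [|j] IH; first exact: phiJ1.
apply: phi_basis => a b hab hl.
have [t /andP[hat htb] hj] := ilen_L1 hab hl.
have hne : a != b by apply/eqP => e; move: hat; rewrite e => /lt_le_trans /(_ htb); rewrite ltxx.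
rewrite -(@br_eb a t b) ?(ltW hat) // phi_br; [|exact: eb_incid (ltW hat)|exact: eb_incid htb].
apply: brJ; first apply: phiJ1; first by apply: eb_inJ; [exact: ltW | exact: ilen_lt1].
by apply: IH; apply: eb_inJ.
Qed.

End Phi.

Section Ideal.
Variables (d : Order.disp_t) (X : finPOrderType d) (K : fieldType).
Notation I := (IA X K).

Lemma iscale0 (f : I) : iscale 0 f = 0.
Proof. by apply/ffunP => p; rewrite !ffunE mul0r. Qed.

Lemma imul0l (f : I) : imul 0 f = 0.
Proof. apply/ffunP => p; rewrite !ffunE; apply: big1 => t _; by rewrite ffunE mul0r. Qed.

Lemma imul0r (f : I) : imul f 0 = 0.
Proof. apply/ffunP => p; rewrite !ffunE; apply: big1 => t _; by rewrite ffunE mulr0. Qed.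

Lemma ideal_of_support (u v : X) (D : I) : (u <= v)%O ->
  (forall p, D p != 0 -> (p.1 <= u)%O && (v <= p.2)%O) -> in_ideal_gen u v D.
Proof.
move=> huv hD.
pose fs (p : X * X) : I := if (p.1 <= u)%O then iscale (D p) (eb K p.1 u) else 0.
pose gs (p : X * X) : I := if (v <= p.2)%O then eb K v p.2 else 0.
have hfs p : incid (fs p).
  rewrite /fs; case: ifP => h; [by apply: incidZ; apply: eb_incid | exact: incid0].
have hgs p : incid (gs p).
  rewrite /gs; case: ifP => h; [by apply: eb_incid | exact: incid0].
exists #|(predT : pred (X * X))|, (fun j => fs (enum_val j)), (fun j => gs (enum_val j)).
split; first by move=> j; split.
rewrite -(@big_enum_val _ _ _ _ predT (fun p => imul (imul (fs p) (eb K u v)) (gs p))).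
rewrite {1}(decomp D); apply: eq_big => // p _.
case: (eqVneq (D p) 0) => [e|ne].
  rewrite e iscale0 /fs /gs; case: ifP => h1; last by rewrite imul0l imul0l.
  case: ifP => h2; last by rewrite imul0r.
  by rewrite e iscale0 imul0l imul0l.
have /andP[h1 h2] := hD p ne.
rewrite /fs /gs h1 h2; apply/ffunP => [[r s]].
rewrite (@imul_ebr d X K v p.2 _ r s h2); last exact: imul_incid.
rewrite (@imul_ebr d X K u v _ r v huv); last by apply: incidZ; apply: eb_incid.
rewrite eqxx !ffunE /= eqxx andbT.
by case: (r == p.1); case: (s == p.2); rewrite /= ?mulr0.
Qed.

Lemma entry_br (H G : I) (a b : X) : (a <= b)%O ->
  (forall t, (a < t)%O -> (t <= b)%O -> G (t, b) = 0) ->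
  (forall t, (a <= t)%O -> (t < b)%O -> G (a, t) = 0) ->
  ibracket H G (a, b) = (H (a, a) - H (b, b)) * G (a, b).
Proof.
move=> hab h1 h2; rewrite ibrE !ffunE /=.
rewrite (bigD1 a) ?lexx ?hab //= big1 ?addr0; last first.
  move=> t /andP[/andP[ht1 ht2] hne]; rewrite h1 ?mulr0 //.
  by rewrite lt_neqAle eq_sym hne ht1.
rewrite (bigD1 b) ?lexx ?hab //= big1 ?addr0; last first.
  move=> t /andP[/andP[ht1 ht2] hne]; rewrite h2 ?mul0r //.
  by rewrite lt_neqAle hne ht2.
by rewrite mulrBl [G _ * _]mulrC.
Qed.

End Ideal.
Unset Implicit Arguments. Set Strict Implicit.

Theorem lemma4p4 (d : Order.disp_t) (X : finPOrderType d) (K : fieldType)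
  (phi : IA X K -> IA X K) (x y u v : X) (i : nat) (k : K) :
  connected_poset X ->
  lie_aut phi ->
  (x <= y)%O -> ilen x y = i -> (0 < i)%N ->
  (u < v)%O -> k != 0 ->
  Lcomp i (phi (eb K x y)) = iscale k (eb K u v) ->
  in_ideal_gen u v (phi (eb K x y) - Lcomp i (phi (eb K x y))) /\
  inJ i.+1 (phi (eb K x y) - Lcomp i (phi (eb K x y))).
Proof.
move=> _ hphi hxy hi i0 huv k0 hL.
set g := phi (eb K x y).
have ginc : incid g by apply: phi_incid => //; apply: eb_incid.
have gJ : inJ i g by apply: phiJ => //; apply: eb_inJ => //; rewrite hi.
have hLab : forall a b, (a <= b)%O -> ilen a b = i ->
    g (a, b) = k * (if (a == u) && (b == v) then 1 else 0).
  move=> a b hab hab'.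
  have := congr1 (fun f : IA X K => f (a, b)) hL; rewrite /= !ffunE /= hab hab' eqxx /=.
  by move=> ->.
have [hiuv guv] : ilen u v = i /\ g (u, v) = k.
  have := congr1 (fun f : IA X K => f (u, v)) hL; rewrite /= !ffunE /= !eqxx (ltW huv) /= mulr1.
  by case: eqP => [-> <-|_ e] //; move: k0; rewrite -e eqxx.
rewrite hL.
split; last first.
  split; first by apply: incidB => //; apply: incidZ; apply: eb_incid; exact: ltW.
  move=> a b hab hl; rewrite !ffunE /=.
  rewrite ltnS leq_eqVlt in hl; case/orP: hl => [/eqP e|hl].
    by rewrite hLab // subrr.
  case: gJ => _ ->; rewrite // sub0r.
  case: eqP => [ea|]; case: eqP => [eb|] //=; rewrite ?mulr0 ?oppr0 //.
  by move: hl; rewrite ea eb hiuv ltnn.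
apply: ideal_of_support; first exact: ltW.
pose dg (z t : X) := phi (eb K z z) (t, t).
pose eps (z : X) : K := (z == x)%:R - (z == y)%:R.
have hxy' : x != y by apply/eqP => e; move: i0; rewrite -hi e ilen_refl.
have hbr : forall z, ibracket (phi (eb K z z)) g = iscale (eps z) g.
  move=> z; rewrite /g -phi_br //; try (apply: eb_incid; rewrite ?lexx //).
  rewrite -phiZ //; last exact: eb_incid.
  congr phi; apply/ffunP => [[p q]].
  rewrite ibrE (@imul_ebl d X K z z _ p q (lexx z)); last exact: eb_incid.
  rewrite (@imul_ebl d X K x y _ p q hxy); last exact: eb_incid.
  rewrite !ffunE /= /eps.
  case: (eqVneq z x) => [->|hzx].
    rewrite (negbTE hxy') (eq_sym y x) (negbTE hxy') /= subr0 ?mul1r.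
    by case: (p == x); case: (q == y); rewrite /= ?subr0 ?mul1r ?mulr1 ?mulr0.
  rewrite /= if_same sub0r sub0r.
  case: (eqVneq z y) => [->|hzy] /=.
    by rewrite mulN1r; case: (p == x); case: (q == y).
  by rewrite if_same oppr0 mul0r.
have hsurj : forall w : X, exists c : X * X -> K,
    forall t, (t == w)%:R = \sum_(p : X * X | p.1 == p.2) c p * dg p.1 t.
  move=> w; have [f finc hf] := phi_surj hphi (eb_incid K (lexx w)).
  pose fd := \sum_(p : X * X | p.1 == p.2) iscale (f p) (eb K p.1 p.2).
  have hinc : forall p : X * X, p.1 == p.2 -> incid (iscale (f p) (eb K p.1 p.2)).
    by move=> [p q] /= /eqP <-; apply: incidZ; apply: eb_incid.
  have fdinc : incid fd by apply: (big_ind (@incid d X K)); [exact: incid0 | exact: incidD | exact: hinc].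
  have fnJ : inJ 1 (f - fd).
    split; first exact: incidB.
    move=> a b hab hl; have e := ilen_le_eq hab hl; subst b.
    rewrite ffunE /fd ffunE sum_ffunE (bigD1 (a, a)) //= ffunE /= ffunE /= !eqxx mulr1.
    rewrite big1 ?addr0 ?subrr // => [[p q]] /andP[/= hpq hne].
    rewrite !ffunE /=; case: eqP => [ep|]; case: eqP => [eq|] //=; rewrite ?mulr0 //.
    by move: hne; rewrite -ep -eq eqxx.
  have hpf : phi f = phi fd + phi (f - fd).
    by rewrite -phiD //; [rewrite addrC subrK | exact: incidB].
  exists (fun p => f p) => t.
  have := congr1 (fun h : IA X K => h (t, t)) hpf; rewrite hf /= [in X in _ = X -> _]ffunE.
  case: (phiJ1 hphi fnJ) => _ ->; rewrite ?lexx ?ilen_refl // addr0.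
  rewrite /fd phi_sum // sum_ffunE ffunE /= andbb => e.
  transitivity (if t == w then 1 else 0 : K); first by case: (t == w).
  rewrite e.
  apply: eq_bigr => [[p q]] /= /eqP eq; subst q.
  by rewrite phiZ ?ffunE //; apply: eb_incid.
have heig : forall a b, (a <= b)%O ->
    (forall t, (a < t)%O -> (t <= b)%O -> g (t, b) = 0) ->
    (forall t, (a <= t)%O -> (t < b)%O -> g (a, t) = 0) ->
    g (a, b) != 0 -> forall z, dg z a - dg z b = eps z.
  move=> a b hab h1 h2 hne z.
  have := congr1 (fun h : IA X K => h (a, b)) (hbr z).
  rewrite /= entry_br // ffunE; exact: (mulIf hne).
have huv_eig : forall z, dg z u - dg z v = eps z.
  apply: heig; first exact: ltW.
  - move=> t hut htv; case: gJ => _ -> //; rewrite -hiuv; exact: ilen_M1.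
  - move=> t hut htv; case: gJ => _ ->; rewrite // -hiuv; exact: ilen_M2.
  - by rewrite guv.
have huniq : forall a b, (a < b)%O -> (forall z, dg z a - dg z b = eps z) -> a = u /\ b = v.
  move=> a b hab hz.
  have hw : forall w, ((a == w)%:R - (b == w)%:R : K) = (u == w)%:R - (v == w)%:R.
    move=> w; have [c hc] := hsurj w.
    rewrite !hc -!sumrB; apply: eq_bigr => p _; by rewrite -!mulrBr hz huv_eig.
  have hab' : (a == b) = false by apply/negbTE; rewrite lt_neqAle in hab; case/andP: hab.
  have hba' : (b == a) = false by rewrite eq_sym.
  have ha := hw a; have hb := hw b; rewrite eqxx hba' subr0 in ha; rewrite eqxx hab' sub0r in hb.
  case: (eqVneq u a) => [eua|nua].
    subst u; rewrite hab' sub0r in hb; split => //.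
    case: (eqVneq v b) => // nvb; move: hb; rewrite (negbTE nvb) oppr0 => /eqP.
    by rewrite oppr_eq0 oner_eq0.
  rewrite (negbTE nua) sub0r in ha.
  case: (eqVneq v a) => [eva|nva]; last by move: ha; rewrite (negbTE nva) oppr0 => /eqP; rewrite oner_eq0.
  subst v; rewrite hab' subr0 in hb.
  case: (eqVneq u b) => [eub|nub]; last by move: hb => /eqP; rewrite (negbTE nub) oppr_eq0 oner_eq0.
  by subst u; move: (lt_trans hab huv); rewrite ltxx.
have key : forall n a b, (ilen a b < n)%N -> g (a, b) != 0 -> (a <= u)%O && (v <= b)%O.
  elim=> [//|n IH] a b hn hne.
  case: (boolP (a <= b)%O) => hab; last by move: hne; rewrite ginc // eqxx.
  case: (boolP ((a <= u)%O && (v <= b)%O)) => // hreg; exfalso.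
  rewrite ltnS in hn.
  have h1 : forall t, (a < t)%O -> (t <= b)%O -> g (t, b) = 0.
    move=> t hat htb; apply/eqP; apply/negP => /negP hn'.
    have := IH t b (leq_trans (ilen_M1 hat htb) hn) hn'.
    case/andP => htu hvb; move: hreg; by rewrite (le_trans (ltW hat) htu) hvb.
  have h2 : forall t, (a <= t)%O -> (t < b)%O -> g (a, t) = 0.
    move=> t hat htb; apply/eqP; apply/negP => /negP hn'.
    have := IH a t (leq_trans (ilen_M2 hat htb) hn) hn'.
    case/andP => hau hvt; move: hreg; by rewrite hau (le_trans hvt (ltW htb)).
  have hne' : a != b.
    apply/eqP => e; subst b; move: hne; case: gJ => _ ->; rewrite ?eqxx ?ilen_refl //.
  have hlt : (a < b)%O by rewrite lt_neqAle hne' hab.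
  have [ea eb] := huniq a b hlt (heig a b hab h1 h2 hne).
  by move: hreg; rewrite ea eb !lexx.
move=> [a b] /=; rewrite !ffunE /=.
case: (boolP ((a == u) && (b == v))) => [/andP[/eqP -> /eqP ->]|_]; first by rewrite !lexx.
rewrite mulr0 subr0 => hne; exact: (key (ilen a b).+1).
Qed.
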